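(* Let $\mathbb{F}$ be a field of characteristic $2$, $V$ a finite-dimensional $\mathbb{F}$-vector space and $b$ a non-degenerate symmetric bilinear form on $V$. Let $x$ be a non-zero vector of $V$ with $b(x,x)=0$, and let $u$ be a $b$-alternating endomorphism of $V$. The following are equivalent: (i) $u(x)=0$ and $u(\{x\}^\perp) \subset \mathbb{F}x$; (ii) there exists $y \in \{x\}^\perp$ such that $u = x\wedge_b y$. Moreover, if these conditions hold then $u$ is nilpotent.
   Context: An endomorphism $u$ of $V$ is $b$-alternating if the bilinear form $(z,w)\mapsto b(z,u(w))$ is alternating (vanishes on all pairs $(z,z)$). $\{x\}^\perp = \{z\in V : b(x,z)=0\}$. For $x,y\in V$, $x \wedge_b y$ is the endomorphism $z \mapsto b(y,z)\,x - b(x,z)\,y$. *)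

(* Defs.v *)
From HB Require Import structures.
From mathcomp Require Import all_boot all_algebra.
Set Implicit Arguments. Unset Strict Implicit. Unset Printing Implicit Defensive.
Import GRing.Theory.
Local Open Scope ring_scope.

Definition bilinear_bform (F : fieldType) (V : vectType F) (b : V -> V -> F) : Prop :=
  (forall (a : F) (x1 x2 y : V), b (a *: x1 + x2) y = a * b x1 y + b x2 y) /\
  (forall (a : F) (x y1 y2 : V), b x (a *: y1 + y2) = a * b x y1 + b x y2).

Definition symmetric_bform (F : fieldType) (V : vectType F) (b : V -> V -> F) : Prop :=
  forall x y : V, b x y = b y x.

Definition nondegenerate_bform (F : fieldType) (V : vectType F) (b : V -> V -> F) : Prop :=
  forall x : V, (forall y : V, b x y = 0) -> x = 0.

Definition b_alternating (F : fieldType) (V : vectType F) (b : V -> V -> F)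
  (u : 'End(V)) : Prop :=
  forall z : V, b z (u z) = 0.

Definition orth (F : fieldType) (V : vectType F) (b : V -> V -> F) (x : V) : pred V :=
  fun z => b x z == 0.

Definition wedge_b (F : fieldType) (V : vectType F) (b : V -> V -> F) (x y : V) : V -> V :=
  fun z => b y z *: x - b x z *: y.

Definition nilpotent_end (F : fieldType) (V : vectType F) (u : 'End(V)) : Prop :=
  exists k : nat, forall z : V, iter k u z = 0.

(* Main.v *)
Require Import Defs.
From HB Require Import structures.
From mathcomp Require Import all_boot all_algebra.
From Stdlib Require Import Classical.
Import GRing.Theory.
Local Open Scope ring_scope.

Section Helpers.
Variables (F : fieldType) (V : vectType F) (b : V -> V -> F).
Hypothesis hbil : bilinear_bform b.
Hypothesis hsym : symmetric_bform b.

Lemma bl0 y : b 0 y = 0.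
Proof.
have := hbil.1 1 0 0 y; rewrite scaler0 addr0 mul1r => H.
by have := congr1 (fun t => t - b 0 y) H; rewrite addrK subrr => ->.
Qed.

Lemma blD x1 x2 y : b (x1 + x2) y = b x1 y + b x2 y.
Proof. by have := hbil.1 1 x1 x2 y; rewrite scale1r mul1r. Qed.

Lemma blZ a x1 y : b (a *: x1) y = a * b x1 y.
Proof. by have := hbil.1 a x1 0 y; rewrite addr0 bl0 addr0. Qed.

Lemma blN x1 y : b (- x1) y = - b x1 y.
Proof. by rewrite -scaleN1r blZ mulN1r. Qed.

Lemma blB x1 x2 y : b (x1 - x2) y = b x1 y - b x2 y.
Proof. by rewrite blD blN. Qed.

Lemma brD x y1 y2 : b x (y1 + y2) = b x y1 + b x y2.
Proof. by rewrite !(hsym x) blD. Qed.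
Lemma brZ a x y : b x (a *: y) = a * b x y.
Proof. by rewrite !(hsym x) blZ. Qed.
Lemma brN x y : b x (- y) = - b x y.
Proof. by rewrite !(hsym x) blN. Qed.
Lemma brB x y1 y2 : b x (y1 - y2) = b x y1 - b x y2.
Proof. by rewrite !(hsym x) blB. Qed.
Lemma br0 x : b x 0 = 0.
Proof. by rewrite hsym bl0. Qed.

Lemma skew (u : 'End(V)) : b_alternating b u -> forall z w, b z (u w) = - b w (u z).
Proof.
move=> hu z w; have := hu (z + w).
rewrite linearD blD !brD hu (hu w) add0r addr0 => /eqP.
by rewrite addr_eq0 => /eqP.
Qed.
End Helpers.

Theorem corollary4p6 (F : fieldType) (V : vectType F) (b : V -> V -> F)
  (hchar : 2%N \in [pchar F])
  (hbil : bilinear_bform b) (hsym : symmetric_bform b) (hnd : nondegenerate_bform b)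
  (x : V) (hx0 : x != 0) (hxx : b x x = 0)
  (u : 'End(V)) (hu : b_alternating b u) :
  (((u x = 0 /\ forall z : V, z \in orth b x -> u z \in <[x]>%VS)
     <-> (exists2 y : V, y \in orth b x & forall z : V, u z = wedge_b b x y z))
   /\ ((u x = 0 /\ forall z : V, z \in orth b x -> u z \in <[x]>%VS)
       -> nilpotent_end u)).
Proof.
have orthE : forall y, (y \in orth b x) = (b x y == 0).
  by move=> y; rewrite unfold_in.
have sk := @skew F V b hbil hsym u hu.
have ii_i : (exists2 y : V, y \in orth b x & forall z : V, u z = wedge_b b x y z) ->
    (u x = 0 /\ forall z : V, z \in orth b x -> u z \in <[x]>%VS).
  move=> [y]; rewrite orthE => /eqP hxy hw; split.
    by rewrite hw /wedge_b hsym hxy hxx !scale0r subrr.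
  move=> z; rewrite orthE => /eqP hxz; apply/vlineP; exists (b y z).
  by rewrite hw /wedge_b hxz scale0r subr0.
have i_ii : (u x = 0 /\ forall z : V, z \in orth b x -> u z \in <[x]>%VS) ->
    (exists2 y : V, y \in orth b x & forall z : V, u z = wedge_b b x y z).
  move=> [ux0 hperp].
  have [w0 hw0] : exists w0, b x w0 != 0.
    apply: NNPP => hn; move/negP: hx0; apply; apply/eqP; apply: hnd => y.
    apply: NNPP => hy; apply: hn; exists y; exact/eqP.
  pose w := (b x w0)^-1 *: w0.
  have hw : b x w = 1 by rewrite /w (@brZ F V b hbil hsym) mulVf.
  exists (- u w).
    by rewrite orthE (@brN F V b hbil hsym) sk ux0 (@br0 F V b hbil hsym) !oppr0.
  move=> z; pose z' := z - b x z *: w.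
  have hz' : z' \in orth b x by rewrite orthE /z' (@brB F V b hbil hsym) (@brZ F V b hbil hsym) hw mulr1 subrr.
  have [c hc] := vlineP _ _ (hperp _ hz').
  have huz : u z = u z' + b x z *: u w by rewrite /z' linearB linearZ subrK.
  have hc' : b (u w) z = - c.
    have e : b (u w) z' = b (u w) z - b x z * b (u w) w.
      by rewrite /z' (@brB F V b hbil hsym) (@brZ F V b hbil hsym).
    rewrite (hsym (u w) w) (hu w) mulr0 subr0 in e.
    rewrite -e hsym sk hc (@brZ F V b hbil hsym) hsym hw mulr1.
    by [].
  rewrite huz /wedge_b (@blN F V b hbil) hc' opprK hc scalerN opprK.
  by [].
split; first by split.
move=> /i_ii [y]; rewrite orthE => /eqP hxy hw.
have ux0 : u x = 0 by rewrite hw /wedge_b hsym hxy hxx !scale0r subrr.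
have uy : u y = b y y *: x by rewrite hw /wedge_b hxy scale0r subr0.
have uz : forall a c, u (a *: x - c *: y) = - (c * b y y) *: x.
  move=> a c; rewrite raddfB /= !linearZ /= ux0 uy scaler0.
  by rewrite add0r scalerN scalerA scaleNr.
exists 3%N => z /=.
have ux : forall a, u (a *: x) = 0 by move=> a; rewrite linearZ /= ux0 scaler0.
by rewrite (hw z) /wedge_b uz ux.
Qed.
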